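(* Let $\mathfrak l$ be a real finite-dimensional nilpotent admissible Lie algebra with $\dim\mathfrak l'=2$ and $\mathfrak l'\subset\mathfrak z(\mathfrak l)$, having a basis $X_1,\dots,X_n,Y,Z$ ($n\ge4$) with $[X_1,X_2]=Y$, $[X_1,X_3]=Z$, $[X_2,X_3]=0$, $[X_1,X_4]=0$, $[X_2,X_4]=Z$, and $[X_1,X_j]=[X_2,X_j]=0$ for $j\ge5$. Then $[X_3,X_j]=0$ for all $j\ge5$.
   Context: For a Lie algebra $\mathfrak l$: $\mathfrak l^1=\mathfrak l$, $\mathfrak l^{k+1}=[\mathfrak l,\mathfrak l^k]$, $\mathfrak l'=\mathfrak l^2$, $\mathfrak z(\mathfrak l)$ the centre. An orthogonal $\mathfrak l$-module $(\rho,\mathfrak a)$ is a finite-dimensional real vector space with a nondegenerate symmetric bilinear form $\langle\cdot,\cdot\rangle_{\mathfrak a}$ and a representation by skew-adjoint maps. $C^p(\mathfrak l,\mathfrak a)$: alternating $p$-linear maps with Chevalley–Eilenberg differential $d$; $C^p(\mathfrak l)=C^p(\mathfrak l,\mathbb R)$; $\langle\alpha\wedge\beta\rangle$ is the wedge product followed by contraction with $\langle\cdot,\cdot\rangle_{\mathfrak a}$. $\mathcal Z^2_Q(\mathfrak l,\mathfrak a)=\{(\alpha,\gamma)\in C^2(\mathfrak l,\mathfrak a)\oplus C^3(\mathfrak l): d\alpha=0,d\gamma=\frac12\langle\alpha\wedge\alpha\rangle\}$; the group $C^1(\mathfrak l,\mathfrak a)\oplus C^2(\mathfrak l)$ with $(\tau_1,\sigma_1)*(\tau_2,\sigma_2)=(\tau_1+\tau_2,\sigma_1+\sigma_2+\frac12\langle\tau_1\wedge\tau_2\rangle)$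 acts by $(\alpha,\gamma)(\tau,\sigma)=(\alpha+d\tau,\gamma+d\sigma+\langle(\alpha+\frac12d\tau)\wedge\tau\rangle)$; $\mathcal H^2_Q(\mathfrak l,\mathfrak a)$ is the orbit set. Admissibility: for semisimple $(\rho,\mathfrak a)$, with $\mathfrak l^{m+2}=0$, $\mathfrak l_{(0)}=\mathfrak z(\mathfrak l)\cap\ker\rho$, $\mathfrak l_{(k)}=\mathfrak z(\mathfrak l)\cap\mathfrak l^{k+1}$ ($k\ge1$), and a representative with $\alpha(\mathfrak l,\mathfrak l)\subset\mathfrak a^{\mathfrak l}$, a class is admissible iff for all $0\le k\le m$: $(A_k)$ whenever $L_0\in\mathfrak l_{(k)}$ and there are $A_0\in\mathfrak a$, $Z_0\in(\mathfrak l^{k+1})^*$ with $\alpha(L,L_0)=0$ and $\gamma(L,L_0,\cdot)=-\langle A_0,\alpha(L,\cdot)\rangle_{\mathfrak a}+\langle Z_0,[L,\cdot]\rangle$ on $\mathfrak l^{k+1}$ for all $L$, then $L_0=0$; $(B_k)$ $\alpha$ applied to the kernel of the bracket map $\mathfrak l\otimes\mathfrak l^{k+1}\to\mathfrak l$ is a nondegenerate subspace of $\mathfrak a$. $\mathfrak l$ is admissible if some semisimple orthogonal module admits an admissible class. *)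

(* Defs.v *)
From HB Require Import structures.
From mathcomp Require Import all_boot all_order all_algebra.
From mathcomp Require Import reals.
Set Implicit Arguments. Unset Strict Implicit. Unset Printing Implicit Defensive.
Import Order.TTheory GRing.Theory Num.Theory.
Local Open Scope ring_scope.

Section LieDefs.
Variables (R : realType) (d : nat).
Local Notation V := 'rV[R]_d.
Variable br : V -> V -> V.

(* Lie algebra axioms: bilinear (linearity in the 1st slot + antisymmetry),
   antisymmetric, Jacobi. *)
Definition lie_algebra : Prop :=
  [/\ forall (a : R) (x y z : V), br (a *: x + y) z = a *: br x z + br y z,
      forall x y : V, br x y = - br y x &
      forall x y z : V, br x (br y z) + br y (br z x) + br z (br x y) = 0].

(* in_lcs k v  <->  v belongs to l^{k+1}  (lower central series, l^1 = l,
   l^{k+1} = [l, l^k] = span of brackets = set of finite sums of brackets). *)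
Fixpoint in_lcs (k : nat) (v : V) : Prop :=
  match k with
  | 0 => True
  | k'.+1 => exists s : seq (V * V),
      (forall q, q \in s -> in_lcs k' q.2) /\ v = \sum_(q <- s) br q.1 q.2
  end.

Definition nilpotent_lie : Prop := exists m, forall v, in_lcs m v -> v = 0.

Definition in_center (x : V) : Prop := forall y, br x y = 0.

Definition sub_dim (P : V -> Prop) (k : nat) : Prop :=
  exists B : 'M[R]_(k, d), row_free B /\ forall v, P v <-> (v <= B)%MS.

Variable p : nat.
Local Notation A := 'rV[R]_p.
Variables (fm : A -> A -> R) (act : V -> A -> A).

Definition orth_module : Prop :=
  (forall (a : R) u v w, fm (a *: u + v) w = a * fm u w + fm v w) /\
      (forall u v, fm u v = fm v u) /\
      (forall v, (forall u, fm u v = 0) -> v = 0) /\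
      (forall (a : R) x y v, act (a *: x + y) v = a *: act x v + act y v) /\
      (forall (a : R) x u v, act x (a *: u + v) = a *: act x u + act x v) /\
      (forall x y v, act (br x y) v = act x (act y v) - act y (act x v)) /\
      (forall x u v, fm (act x u) v = - fm u (act x v)).

Definition invariant_sub (U : 'M[R]_p) : Prop :=
  forall x u, (u <= U)%MS -> (act x u <= U)%MS.

Definition semisimple_module : Prop :=
  forall U : 'M[R]_p, invariant_sub U ->
    exists W : 'M[R]_p, invariant_sub W /\ capmx U W = 0 /\ (U + W == 1%:M)%MS.

Definition cochain2 (al : V -> V -> A) : Prop :=
  [/\ (forall (a : R) x y z, al (a *: x + y) z = a *: al x z + al y z),
      (forall (a : R) x y z, al z (a *: x + y) = a *: al z x + al z y) &
      (forall x, al x x = 0)].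

Definition cochain3 (g : V -> V -> V -> R) : Prop :=
  [/\ (forall (a : R) x y z w, g (a *: x + y) z w = a * g x z w + g y z w),
      (forall (a : R) x y z w, g z (a *: x + y) w = a * g z x w + g z y w),
      (forall (a : R) x y z w, g z w (a *: x + y) = a * g z w x + g z w y) &
      (forall x y, [/\ g x x y = 0, g x y x = 0 & g y x x = 0])].

Definition d2 (al : V -> V -> A) (x y z : V) : A :=
  act x (al y z) - act y (al x z) + act z (al x y)
  - al (br x y) z + al (br x z) y - al (br y z) x.

Definition d3 (g : V -> V -> V -> R) (x1 x2 x3 x4 : V) : R :=
  - g (br x1 x2) x3 x4 + g (br x1 x3) x2 x4 - g (br x1 x4) x2 x3
  - g (br x2 x3) x1 x4 + g (br x2 x4) x1 x3 - g (br x3 x4) x1 x2.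

(* <al /\ be> : wedge product (sum over (2,2)-shuffles) contracted with fm *)
Definition wedge22 (al be : V -> V -> A) (x1 x2 x3 x4 : V) : R :=
  fm (al x1 x2) (be x3 x4) - fm (al x1 x3) (be x2 x4) + fm (al x1 x4) (be x2 x3)
  + fm (al x2 x3) (be x1 x4) - fm (al x2 x4) (be x1 x3) + fm (al x3 x4) (be x1 x2).

Definition quad_cocycle (al : V -> V -> A) (g : V -> V -> V -> R) : Prop :=
  [/\ cochain2 al, cochain3 g,
      (forall x y z, d2 al x y z = 0) &
      (forall x1 x2 x3 x4, d3 g x1 x2 x3 x4 = wedge22 al al x1 x2 x3 x4 / 2)].

Definition l_sub (k : nat) (L : V) : Prop :=
  if k is 0 then in_center L /\ (forall v, act L v = 0)
  else in_center L /\ in_lcs k L.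

Definition cond_A (al : V -> V -> A) (g : V -> V -> V -> R) (k : nat) : Prop :=
  forall L0 : V, l_sub k L0 ->
    (exists (A0 : A) (Z0 : V -> R),
        (forall (a : R) u v, in_lcs k u -> in_lcs k v ->
            Z0 (a *: u + v) = a * Z0 u + Z0 v) /\
        (forall L : V, al L L0 = 0 /\
           forall y, in_lcs k y -> g L L0 y = - fm A0 (al L y) + Z0 (br L y))) ->
    L0 = 0.

(* al applied to ker( l (x) l^{k+1} -> l ) *)
Definition alpha_ker (al : V -> V -> A) (k : nat) (v : A) : Prop :=
  exists s : seq (V * V),
    [/\ forall q, q \in s -> in_lcs k q.2,
        \sum_(q <- s) br q.1 q.2 = 0 &
        v = \sum_(q <- s) al q.1 q.2].

Definition cond_B (al : V -> V -> A) (k : nat) : Prop :=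
  forall v, alpha_ker al k v ->
    (forall w, alpha_ker al k w -> fm v w = 0) -> v = 0.

End LieDefs.

(* l admissible: some semisimple orthogonal module admits an admissible class,
   i.e. a cocycle (al,g) with al(l,l) in a^l satisfying all (A_k),(B_k). *)
Definition admissible_lie (R : realType) (d : nat)
    (br : 'rV[R]_d -> 'rV[R]_d -> 'rV[R]_d) : Prop :=
  exists (p : nat) (fm : 'rV[R]_p -> 'rV[R]_p -> R) (act : 'rV[R]_d -> 'rV[R]_p -> 'rV[R]_p)
         (al : 'rV[R]_d -> 'rV[R]_d -> 'rV[R]_p) (g : 'rV[R]_d -> 'rV[R]_d -> 'rV[R]_d -> R),
    [/\ orth_module br fm act, semisimple_module act,
        quad_cocycle br fm act al g,
        (forall x y z, act z (al x y) = 0) &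
        forall m, (forall v, in_lcs br m.+1 v -> v = 0) ->
          forall k, (k <= m)%N -> cond_A br fm act al g k /\ cond_B br fm al k].

Definition fam_mx (R : realType) (d n : nat) (X : nat -> 'rV[R]_d) (Y Z : 'rV[R]_d)
  : 'M[R]_(n.+2, d) :=
  \matrix_(i < n.+2) (if (i < n)%N then X i.+1 else if i == n :> nat then Y else Z).

(* Main.v *)
Require Import Defs.
From HB Require Import structures.
From mathcomp Require Import all_boot all_order all_algebra.
From mathcomp Require Import reals.
From mathcomp Require Import ring lra zify.
From Stdlib Require Import Classical.
Import Order.TTheory GRing.Theory Num.Theory.
Local Open Scope ring_scope.

Section Lin.
Variables (R : realType) (U W : lmodType R) (f : U -> W).
Hypothesis Hf : forall a x y, f (a *: x + y) = a *: f x + f y.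
Lemma lin0 : f 0 = 0.
Proof. have h := Hf 1 0 0; rewrite !scale1r addr0 in h.
by apply: (@addrI _ (f 0)); rewrite addr0 -h. Qed.
Lemma linZ a x : f (a *: x) = a *: f x.
Proof. by rewrite -[a *: x]addr0 Hf lin0 addr0. Qed.
Lemma linD x y : f (x + y) = f x + f y.
Proof. by have := Hf 1 x y; rewrite !scale1r. Qed.
Lemma linN x : f (- x) = - f x.
Proof. by rewrite -scaleN1r linZ scaleN1r. Qed.
Lemma linB x y : f (x - y) = f x - f y.
Proof. by rewrite linD linN. Qed.
End Lin.

Section LinS.
Variables (R : realType) (U : lmodType R) (f : U -> R).
Hypothesis Hf : forall a x y, f (a *: x + y) = a * f x + f y.
Lemma slin0 : f 0 = 0.
Proof. have h := Hf 1 0 0; rewrite !scale1r addr0 mul1r in h.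
by apply: (@addrI _ (f 0)); rewrite addr0 -h. Qed.
Lemma slinZ a x : f (a *: x) = a * f x.
Proof. by rewrite -[a *: x]addr0 Hf slin0 addr0. Qed.
Lemma slinD x y : f (x + y) = f x + f y.
Proof. by have := Hf 1 x y; rewrite scale1r mul1r. Qed.
Lemma slinN x : f (- x) = - f x.
Proof. by rewrite -scaleN1r slinZ mulN1r. Qed.
Lemma slinB x y : f (x - y) = f x - f y.
Proof. by rewrite slinD slinN. Qed.
End LinS.

Lemma vec_half (R : realType) (V : lmodType R) (v : V) : v = - v -> v = 0.
Proof.
move=> h. have : (2%:R : R) *: v = 0 by rewrite scaler_nat mulr2n {1}h addNr.
by move/eqP; rewrite scaler_eq0 pnatr_eq0 /= => /eqP.
Qed.

Section Main.
Variables (R : realType) (d n : nat) (br : 'rV[R]_d -> 'rV[R]_d -> 'rV[R]_d)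
  (X : nat -> 'rV[R]_d) (Y Z : 'rV[R]_d).
Variables (p : nat) (fm : 'rV[R]_p -> 'rV[R]_p -> R)
  (act : 'rV[R]_d -> 'rV[R]_p -> 'rV[R]_p)
  (al : 'rV[R]_d -> 'rV[R]_d -> 'rV[R]_p) (g : 'rV[R]_d -> 'rV[R]_d -> 'rV[R]_d -> R).
Hypothesis Hn : (4 <= n)%N.
Hypothesis Hlie : lie_algebra br.
Hypothesis Horth : orth_module br fm act.
Hypothesis Hcoc : quad_cocycle br fm act al g.
Hypothesis Hact : forall x y z, act z (al x y) = 0.
Hypothesis Hadm : forall m, (forall v, in_lcs br m.+1 v -> v = 0) ->
  forall k, (k <= m)%N -> cond_A br fm act al g k /\ cond_B br fm al k.
Hypothesis Hdim : sub_dim (in_lcs br 1) 2.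
Hypothesis Hcen : forall x, in_lcs br 1 x -> in_center br x.
Hypothesis Hfree : row_free (fam_mx n X Y Z).
Hypothesis Hfull : row_full (fam_mx n X Y Z).
Hypothesis H12 : br (X 1%N) (X 2%N) = Y.
Hypothesis H13 : br (X 1%N) (X 3%N) = Z.
Hypothesis H23 : br (X 2%N) (X 3%N) = 0.
Hypothesis H14 : br (X 1%N) (X 4%N) = 0.
Hypothesis H24 : br (X 2%N) (X 4%N) = Z.
Hypothesis H5 : forall j, (5 <= j <= n)%N -> br (X 1%N) (X j) = 0 /\ br (X 2%N) (X j) = 0.

Local Notation V := 'rV[R]_d.

Let brL a x y z : br (a *: x + y) z = a *: br x z + br y z.
Proof. by case: Hlie. Qed.
Let brA x y : br x y = - br y x.
Proof. by case: Hlie. Qed.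
Let brR a x y z : br z (a *: x + y) = a *: br z x + br z y.
Proof. by rewrite brA brL !(brA z) scalerN opprD. Qed.
Lemma br0l z : br 0 z = 0. Proof. exact: (@lin0 _ _ _ (fun w => br w z) (fun a x y => brL a x y z)). Qed.
Lemma brZl a x z : br (a *: x) z = a *: br x z. Proof. exact: (@linZ _ _ _ (fun w => br w z) (fun a x y => brL a x y z)). Qed.
Lemma brDl x y z : br (x + y) z = br x z + br y z. Proof. exact: (@linD _ _ _ (fun w => br w z) (fun a x y => brL a x y z)). Qed.
Lemma brNl x z : br (- x) z = - br x z. Proof. exact: (@linN _ _ _ (fun w => br w z) (fun a x y => brL a x y z)). Qed.
Lemma brBl x y z : br (x - y) z = br x z - br y z. Proof. exact: (@linB _ _ _ (fun w => br w z) (fun a x y => brL a x y z)). Qed.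
Lemma br0r z : br z 0 = 0. Proof. exact: (@lin0 _ _ _ (fun w => br z w) (fun a x y => brR a x y z)). Qed.
Lemma brZr a x z : br z (a *: x) = a *: br z x. Proof. exact: (@linZ _ _ _ (fun w => br z w) (fun a x y => brR a x y z)). Qed.
Lemma brDr x y z : br z (x + y) = br z x + br z y. Proof. exact: (@linD _ _ _ (fun w => br z w) (fun a x y => brR a x y z)). Qed.
Lemma brNr x z : br z (- x) = - br z x. Proof. exact: (@linN _ _ _ (fun w => br z w) (fun a x y => brR a x y z)). Qed.
Lemma brBr x y z : br z (x - y) = br z x - br z y. Proof. exact: (@linB _ _ _ (fun w => br z w) (fun a x y => brR a x y z)). Qed.
Lemma brxx x : br x x = 0. Proof. by apply: vec_half; rewrite {1}brA. Qed.
Lemma brC x y : br x y = - br y x. Proof. exact: brA. Qed.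

Let alL a x y z : al (a *: x + y) z = a *: al x z + al y z.
Proof. by case: Hcoc => [[]]. Qed.
Let alR a x y z : al z (a *: x + y) = a *: al z x + al z y.
Proof. by case: Hcoc => [[]]. Qed.
Lemma alxx x : al x x = 0. Proof. by case: Hcoc => [[]]. Qed.
Lemma al0l z : al 0 z = 0. Proof. exact: (@lin0 _ _ _ (fun w => al w z) (fun a x y => alL a x y z)). Qed.
Lemma alZl a x z : al (a *: x) z = a *: al x z. Proof. exact: (@linZ _ _ _ (fun w => al w z) (fun a x y => alL a x y z)). Qed.
Lemma alDl x y z : al (x + y) z = al x z + al y z. Proof. exact: (@linD _ _ _ (fun w => al w z) (fun a x y => alL a x y z)). Qed.
Lemma alNl x z : al (- x) z = - al x z. Proof. exact: (@linN _ _ _ (fun w => al w z) (fun a x y => alL a x y z)). Qed.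
Lemma alBl x y z : al (x - y) z = al x z - al y z. Proof. exact: (@linB _ _ _ (fun w => al w z) (fun a x y => alL a x y z)). Qed.
Lemma al0r z : al z 0 = 0. Proof. exact: (@lin0 _ _ _ (fun w => al z w) (fun a x y => alR a x y z)). Qed.
Lemma alZr a x z : al z (a *: x) = a *: al z x. Proof. exact: (@linZ _ _ _ (fun w => al z w) (fun a x y => alR a x y z)). Qed.
Lemma alDr x y z : al z (x + y) = al z x + al z y. Proof. exact: (@linD _ _ _ (fun w => al z w) (fun a x y => alR a x y z)). Qed.
Lemma alNr x z : al z (- x) = - al z x. Proof. exact: (@linN _ _ _ (fun w => al z w) (fun a x y => alR a x y z)). Qed.
Lemma alBr x y z : al z (x - y) = al z x - al z y. Proof. exact: (@linB _ _ _ (fun w => al z w) (fun a x y => alR a x y z)). Qed.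
Lemma alC x y : al x y = - al y x.
Proof. have := alxx (x + y); rewrite alDl !alDr !alxx add0r addr0 => /eqP.
by rewrite addr_eq0 => /eqP. Qed.

Let g1 a x y z w : g (a *: x + y) z w = a * g x z w + g y z w.
Proof. by case: Hcoc => _ []. Qed.
Let g2 a x y z w : g z (a *: x + y) w = a * g z x w + g z y w.
Proof. by case: Hcoc => _ []. Qed.
Let g3 a x y z w : g z w (a *: x + y) = a * g z w x + g z w y.
Proof. by case: Hcoc => _ []. Qed.
Let galt x y : [/\ g x x y = 0, g x y x = 0 & g y x x = 0].
Proof. by case: Hcoc => _ []. Qed.
Lemma g0l z w : g 0 z w = 0. Proof. exact: (@slin0 _ _ (fun u => g u z w) (fun a x y => g1 a x y z w)). Qed.
Lemma gZl a x z w : g (a *: x) z w = a * g x z w. Proof. exact: (@slinZ _ _ (fun u => g u z w) (fun a x y => g1 a x y z w)). Qed.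
Lemma gDl x y z w : g (x + y) z w = g x z w + g y z w. Proof. exact: (@slinD _ _ (fun u => g u z w) (fun a x y => g1 a x y z w)). Qed.
Lemma gNl x z w : g (- x) z w = - g x z w. Proof. exact: (@slinN _ _ (fun u => g u z w) (fun a x y => g1 a x y z w)). Qed.
Lemma gBl x y z w : g (x - y) z w = g x z w - g y z w. Proof. exact: (@slinB _ _ (fun u => g u z w) (fun a x y => g1 a x y z w)). Qed.
Lemma g0m z w : g z 0 w = 0. Proof. exact: (@slin0 _ _ (fun u => g z u w) (fun a x y => g2 a x y z w)). Qed.
Lemma gZm a x z w : g z (a *: x) w = a * g z x w. Proof. exact: (@slinZ _ _ (fun u => g z u w) (fun a x y => g2 a x y z w)). Qed.
Lemma gDm x y z w : g z (x + y) w = g z x w + g z y w. Proof. exact: (@slinD _ _ (fun u => g z u w) (fun a x y => g2 a x y z w)). Qed.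
Lemma gNm x z w : g z (- x) w = - g z x w. Proof. exact: (@slinN _ _ (fun u => g z u w) (fun a x y => g2 a x y z w)). Qed.
Lemma gBm x y z w : g z (x - y) w = g z x w - g z y w. Proof. exact: (@slinB _ _ (fun u => g z u w) (fun a x y => g2 a x y z w)). Qed.
Lemma g0r z w : g z w 0 = 0. Proof. exact: (@slin0 _ _ (fun u => g z w u) (fun a x y => g3 a x y z w)). Qed.
Lemma gZr a x z w : g z w (a *: x) = a * g z w x. Proof. exact: (@slinZ _ _ (fun u => g z w u) (fun a x y => g3 a x y z w)). Qed.
Lemma gDr x y z w : g z w (x + y) = g z w x + g z w y. Proof. exact: (@slinD _ _ (fun u => g z w u) (fun a x y => g3 a x y z w)). Qed.
Lemma gNr x z w : g z w (- x) = - g z w x. Proof. exact: (@slinN _ _ (fun u => g z w u) (fun a x y => g3 a x y z w)). Qed.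
Lemma gBr x y z w : g z w (x - y) = g z w x - g z w y. Proof. exact: (@slinB _ _ (fun u => g z w u) (fun a x y => g3 a x y z w)). Qed.
Lemma gxxy x y : g x x y = 0. Proof. by case: (galt x y). Qed.
Lemma gxyx x y : g x y x = 0. Proof. by case: (galt x y). Qed.
Lemma gyxx x y : g y x x = 0. Proof. by case: (galt x y). Qed.
Lemma g12 x y z : g x y z = - g y x z.
Proof. have := gxxy (x + y) z; rewrite gDl !gDm !gxxy add0r addr0 => /eqP.
by rewrite addr_eq0 => /eqP. Qed.
Lemma g23 x y z : g x y z = - g x z y.
Proof. have := gyxx (y + z) x; rewrite gDm !gDr !gyxx add0r addr0 => /eqP.
by rewrite addr_eq0 => /eqP. Qed.
Lemma gcyc x y z : g x y z = g y z x.
Proof. by rewrite g12 g23 opprK. Qed.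

Let fmL a u v w : fm (a *: u + v) w = a * fm u w + fm v w.
Proof. by case: Horth. Qed.
Lemma fmS u v : fm u v = fm v u.
Proof. by case: Horth => _ []. Qed.
Lemma fmND v : (forall u, fm u v = 0) -> v = 0.
Proof. by case: Horth => _ [] _ [] H _; apply: H. Qed.
Let fmR a u v w : fm w (a *: u + v) = a * fm w u + fm w v.
Proof. by rewrite fmS fmL !(fmS w). Qed.
Lemma fm0l z : fm 0 z = 0. Proof. exact: (@slin0 _ _ (fun u => fm u z) (fun a x y => fmL a x y z)). Qed.
Lemma fmZl a x z : fm (a *: x) z = a * fm x z. Proof. exact: (@slinZ _ _ (fun u => fm u z) (fun a x y => fmL a x y z)). Qed.
Lemma fmDl x y z : fm (x + y) z = fm x z + fm y z. Proof. exact: (@slinD _ _ (fun u => fm u z) (fun a x y => fmL a x y z)). Qed.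
Lemma fmNl x z : fm (- x) z = - fm x z. Proof. exact: (@slinN _ _ (fun u => fm u z) (fun a x y => fmL a x y z)). Qed.
Lemma fmBl x y z : fm (x - y) z = fm x z - fm y z. Proof. exact: (@slinB _ _ (fun u => fm u z) (fun a x y => fmL a x y z)). Qed.
Lemma fm0r z : fm z 0 = 0. Proof. exact: (@slin0 _ _ (fun u => fm z u) (fun a x y => fmR a x y z)). Qed.
Lemma fmZr a x z : fm z (a *: x) = a * fm z x. Proof. exact: (@slinZ _ _ (fun u => fm z u) (fun a x y => fmR a x y z)). Qed.
Lemma fmDr x y z : fm z (x + y) = fm z x + fm z y. Proof. exact: (@slinD _ _ (fun u => fm z u) (fun a x y => fmR a x y z)). Qed.
Lemma fmNr x z : fm z (- x) = - fm z x. Proof. exact: (@slinN _ _ (fun u => fm z u) (fun a x y => fmR a x y z)). Qed.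
Lemma fmBr x y z : fm z (x - y) = fm z x - fm z y. Proof. exact: (@slinB _ _ (fun u => fm z u) (fun a x y => fmR a x y z)). Qed.

Lemma lcs1_br x y : in_lcs br 1 (br x y).
Proof.
exists [:: (x, y)]; split; first by [].
by rewrite big_cons big_nil addr0.
Qed.

Lemma cenl w y : in_lcs br 1 w -> br w y = 0.
Proof. by move/Hcen. Qed.
Lemma cenr w y : in_lcs br 1 w -> br y w = 0.
Proof. by move=> h; rewrite brC cenl // oppr0. Qed.

Lemma lcsY : in_lcs br 1 Y. Proof. by rewrite -H12; apply: lcs1_br. Qed.
Lemma lcsZ : in_lcs br 1 Z. Proof. by rewrite -H13; apply: lcs1_br. Qed.
Lemma brYl y : br Y y = 0. Proof. exact: cenl lcsY. Qed.
Lemma brYr y : br y Y = 0. Proof. exact: cenr lcsY. Qed.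
Lemma brZl' y : br Z y = 0. Proof. exact: cenl lcsZ. Qed.
Lemma brZr' y : br y Z = 0. Proof. exact: cenr lcsZ. Qed.

Definition famrow (i : 'I_n.+2) : V :=
  if (i < n)%N then X i.+1 else if i == n :> nat then Y else Z.

Lemma row_fam i : row i (fam_mx n X Y Z) = famrow i.
Proof. by rewrite /fam_mx rowK. Qed.

Lemma basis_ind (P : V -> Prop) : P 0 ->
  (forall a u v, P u -> P v -> P (a *: u + v)) ->
  (forall i, (1 <= i <= n)%N -> P (X i)) -> P Y -> P Z -> forall v, P v.
Proof.
move=> P0 Pcl PX PY PZ v.
have /submxP [D ->] := submx_full v Hfull.
rewrite mulmx_sum_row; elim/big_rec: _ => // i x _ Px.
apply: Pcl => //; rewrite row_fam /famrow.
case: ifP => [hi|_]; first by apply: PX.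
by case: ifP.
Qed.

Lemma indepYZ s t : s *: Y + t *: Z = 0 -> s = 0 /\ t = 0.
Proof.
move=> h.
pose w : 'rV[R]_n.+2 := \row_(i < n.+2)
  (if i == n :> nat then s else if i == n.+1 :> nat then t else 0).
have hw : w *m fam_mx n X Y Z = 0 *m fam_mx n X Y Z.
  rewrite mul0mx mulmx_sum_row big_ord_recr big_ord_recr /=.
  rewrite big1 ?add0r; last first.
    move=> i _; rewrite !mxE /=.
    have hi := ltn_ord i.
    have h1 : (i : nat) != n by lia.
    have h2 : (i : nat) != n.+1 by lia.
    by rewrite (negPf h1) (negPf h2) scale0r.
  rewrite !row_fam /famrow !mxE /= ltnn eqxx ltnNge leqnSn /= eqxx.
  by have -> : (n.+1 == n) = false by lia.
have := row_free_inj Hfree hw => /rowP hh.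
have := hh (Ordinal (ltnSn n.+1)); have := hh (Ordinal (leqnSn n.+1)).
rewrite !mxE /= eqxx /=.
have -> : (n.+1 == n) = false by lia.
by rewrite eqxx => -> ->.
Qed.

Lemma spanYZ w : in_lcs br 1 w -> exists s t, w = s *: Y + t *: Z.
Proof.
move=> hw.
case: Hdim => Bm [fBm HB].
pose M2 : 'M[R]_(2, d) := \matrix_(i < 2) (if i == 0 :> nat then Y else Z).
have sum2 (v : 'rV[R]_2) : v *m M2 = v 0 0 *: Y + v 0 1 *: Z.
  rewrite mulmx_sum_row !big_ord_recl big_ord0 addr0 /M2 !rowK /=.
  by congr (_ *: _ + _ *: _); congr (v _ _); apply: val_inj.
have fM2 : row_free M2.
  apply: inj_row_free => v; rewrite sum2 => /indepYZ [h0 h1].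
  apply/rowP => i; rewrite mxE; case: i => [[|[|k]]] hk //=.
  - by rewrite -h0; congr (v _ _); apply: val_inj.
  - by rewrite -h1; congr (v _ _); apply: val_inj.
have sM : (M2 <= Bm)%MS.
  apply/row_subP => i; rewrite /M2 rowK; apply/HB.
  by case: ifP => _; [apply: lcsY | apply: lcsZ].
have := (mxrank_leqif_sup sM).2.
move: fM2 fBm; rewrite /row_free => /eqP -> /eqP -> /esym; rewrite eqxx => sB.
have /submxP [D ->] : (w <= M2)%MS by apply: submx_trans sB; apply/HB.
by exists (D 0 0), (D 0 1); rewrite sum2.
Qed.

Lemma lcs2_zero v : in_lcs br 2 v -> v = 0.
Proof.
case=> s [hs ->]; rewrite big_seq big1 // => q /hs h; exact: cenr.
Qed.

Lemma condA1 : cond_A br fm act al g 1.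
Proof. by case: (Hadm 1 lcs2_zero 1 (leqnn 1)). Qed.
Lemma condB1 : cond_B br fm al 1.
Proof. by case: (Hadm 1 lcs2_zero 1 (leqnn 1)). Qed.

Lemma dal x y z : al (br x y) z - al (br x z) y + al (br y z) x = 0.
Proof.
case: Hcoc => _ _ h _; have := h x y z; rewrite /d2 !Hact subrr add0r.
rewrite add0r => e; apply/eqP; rewrite -oppr_eq0 opprD opprD opprK; apply/eqP; exact: e.
Qed.

Lemma alYZ : al Y Z = 0.
Proof. by have := dal (X 1) (X 2) Z; rewrite H12 !brZr' !al0l subr0 addr0. Qed.
Lemma alZY : al Z Y = 0.
Proof. by rewrite alC alYZ oppr0. Qed.
Lemma alYY : al Y Y = 0. Proof. exact: alxx. Qed.
Lemma alZZ : al Z Z = 0. Proof. exact: alxx. Qed.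

Lemma dg0 x1 x2 x3 W : in_lcs br 1 W -> al x1 W = 0 -> al x2 W = 0 -> al x3 W = 0 ->
  g (br x1 x2) x3 W - g (br x1 x3) x2 W + g (br x2 x3) x1 W = 0.
Proof.
move=> hW h1 h2 h3.
case: Hcoc => _ _ _ h; have := h x1 x2 x3 W; rewrite /d3 /wedge22.
have cW : forall y, br y W = 0 by move=> y; apply: cenr.
rewrite !cW !g0l h1 h2 h3 !fm0l !fm0r.
move=> e; lra.
Qed.

Lemma Ssym x1 x2 : fm (al x1 Y) (al x2 Z) = fm (al x1 Z) (al x2 Y).
Proof.
case: Hcoc => _ _ _ h; have := h x1 x2 Y Z; rewrite /d3 /wedge22.
rewrite brYr brZr' brYr brZr' brYl !g0l alYZ fm0l fm0r.
have [s [t ->]] := spanYZ _ (lcs1_br x1 x2).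
rewrite gDl !gZl gxxy.
have -> : g Z Y Z = 0 by apply: gxyx.
rewrite (fmS (al x2 Y)) (fmS (al x2 Z)).
move=> e; lra.
Qed.

Lemma Uzero x0 W : in_lcs br 1 W ->
  (forall i, (1 <= i <= n)%N -> fm (al x0 W) (al (X i) Y) = 0 /\ fm (al x0 W) (al (X i) Z) = 0) ->
  al x0 W = 0.
Proof.
move=> hW hX.
set u := al x0 W.
have hall : forall v, fm u (al v Y) = 0 /\ fm u (al v Z) = 0.
  apply: basis_ind.
  - by rewrite !al0l fm0r.
  - move=> a v w [h1 h2] [h3 h4]; by rewrite !alDl !alZl !fmDr !fmZr h1 h2 h3 h4 mulr0 addr0.
  - exact: hX.
  - by rewrite alYY alYZ fm0r.
  - by rewrite alZY alZZ fm0r.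
apply: condB1.
  exists [:: (x0, W)]; split.
  - by move=> q; rewrite inE => /eqP ->.
  - by rewrite big_cons big_nil addr0 cenr.
  - by rewrite big_cons big_nil addr0.
move=> w [s [hs _ ->]].
rewrite big_seq; elim/big_rec: _ => [|q x hq hx]; first by rewrite fm0r.
rewrite fmDr hx addr0.
have [a [b ->]] := spanYZ _ (hs q hq).
by case: (hall q.1) => h1 h2; rewrite alDr !alZr fmDr !fmZr h1 h2 !mulr0 addr0.
Qed.

Lemma cases_i (P : nat -> Prop) : P 1%N -> P 2%N -> P 3%N -> P 4%N ->
  (forall k, (5 <= k <= n)%N -> P k) -> forall i, (1 <= i <= n)%N -> P i.
Proof.
move=> p1 p2 p3 p4 p5 [|[|[|[|[|i]]]]] // hi; apply: p5; lia.
Qed.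

Lemma solve1 u r : u != 0 -> exists x, fm x u = r.
Proof.
move=> hu.
have : ~ (forall x, fm x u = 0) by move=> h; move/eqP: hu; apply; apply: fmND.
move/not_all_ex_not => [x0 hx0].
exists ((r / fm x0 u) *: x0); rewrite fmZl -mulrA mulVf ?mulr1 //; exact/eqP.
Qed.

Lemma solve2 u1 u2 r1 r2 :
  (forall t1 t2, t1 *: u1 + t2 *: u2 = 0 -> t1 * r1 + t2 * r2 = 0) ->
  exists x, fm x u1 = r1 /\ fm x u2 = r2.
Proof.
move=> H.
have [e1|hu1] := eqVneq u1 0.
  rewrite e1 in H *.
  have r10 : r1 = 0 by have := H 1 0; rewrite scaler0 scale0r addr0 mul1r mul0r addr0; apply.
  have [e2|hu2] := eqVneq u2 0.
    have r20 : r2 = 0 by have := H 0 1; rewrite scaler0 scale1r add0r e2 mul1r mul0r add0r; apply.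
    rewrite e2.
    by exists 0; rewrite !fm0l.
  have [x hx] := solve1 u2 r2 hu2.
  by exists x; rewrite fm0r.
have [x1 hx1] := solve1 u1 1 hu1.
set l := fm x1 u2.
have [e|hu2'] := eqVneq (u2 - l *: u1) 0.
  have e' : l *: u1 + (-1) *: u2 = 0.
    by rewrite scaleN1r addrC; move/eqP: e; rewrite subr_eq0 => /eqP <-; rewrite addNr.
  have := H _ _ e' => hr.
  exists (r1 *: x1); rewrite !fmZl hx1 mulr1; split => //.
  rewrite -/l; lra.
have [y0 hy0] := solve1 _ 1 hu2'.
set y := y0 - fm y0 u1 *: x1.
have hy1 : fm y u1 = 0 by rewrite /y fmBl fmZl hx1 mulr1 subrr.
have hx1' : fm x1 (u2 - l *: u1) = 0 by rewrite fmBr fmZr hx1 mulr1 subrr.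
have hy2 : fm y u2 = 1.
  have : fm y (u2 - l *: u1) = 1 by rewrite /y fmBl fmZl hx1' mulr0 subr0.
  by rewrite fmBr fmZr hy1 mulr0 subr0.
exists (r1 *: x1 + (r2 - r1 * l) *: y).
rewrite !fmDl !fmZl hx1 hy1 hy2 -/l; split; ring.
Qed.

Ltac vsolve e := apply/rowP => i; move/rowP/(_ i): e; rewrite !mxE => e; nra.

Lemma eA3 : al (X 3) Y = al (X 2) Z.
Proof.
have e := dal (X 1) (X 2) (X 3); rewrite H12 H13 H23 al0l !(alC Y) !(alC Z) in e.
vsolve e.
Qed.

Lemma eA4 : al (X 4) Y = - al (X 1) Z.
Proof.
have e := dal (X 1) (X 2) (X 4); rewrite H12 H14 H24 al0l !(alC Y) !(alC Z) in e.
vsolve e.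
Qed.

Lemma eAk k : (5 <= k <= n)%N -> al (X k) Y = 0.
Proof.
move=> hk; have [h1 h2] := H5 k hk.
have e := dal (X 1) (X 2) (X k); rewrite H12 h1 h2 !al0l !(alC Y) in e.
vsolve e.
Qed.

Lemma eB4 a34 b34 : br (X 3) (X 4) = a34 *: Y + b34 *: Z ->
  al (X 4) Z = - (a34 *: al (X 1) Y + b34 *: al (X 1) Z).
Proof.
move=> h.
have e := dal (X 1) (X 3) (X 4); rewrite H13 H14 h alDl !alZl al0l !(alC Y) !(alC Z) in e.
vsolve e.
Qed.

Lemma eB3 a34 b34 : br (X 3) (X 4) = a34 *: Y + b34 *: Z ->
  al (X 3) Z = a34 *: al (X 2) Y + b34 *: al (X 2) Z.
Proof.
move=> h.
have e := dal (X 2) (X 3) (X 4); rewrite H23 H24 h alDl !alZl al0l !(alC Y) !(alC Z) in e.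
vsolve e.
Qed.

Lemma eBk k a b : (5 <= k <= n)%N -> br (X 3) (X k) = a *: Y + b *: Z ->
  al (X k) Z = - (a *: al (X 1) Y + b *: al (X 1) Z).
Proof.
move=> hk h; have [h1 h2] := H5 k hk.
have e := dal (X 1) (X 3) (X k); rewrite H13 h1 h alDl !alZl al0l !(alC Y) !(alC Z) in e.
vsolve e.
Qed.

Lemma e2k k a b : (5 <= k <= n)%N -> br (X 3) (X k) = a *: Y + b *: Z ->
  a *: al (X 2) Y + b *: al (X 2) Z = 0.
Proof.
move=> hk h; have [h1 h2] := H5 k hk.
have e := dal (X 2) (X 3) (X k); rewrite H23 h2 h alDl !alZl !al0l !(alC Y) !(alC Z) in e.
vsolve e.
Qed.

Lemma coef3 k : exists a b, br (X 3) (X k) = a *: Y + b *: Z.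
Proof. exact: spanYZ _ (lcs1_br _ _). Qed.

Lemma eBk0 k : (5 <= k <= n)%N -> al (X k) Z = 0.
Proof.
move=> hk.
have [a34 [b34 h34]] := coef3 4.
have inA : forall i, (1 <= i <= n)%N -> exists v, al (X i) Z = al v Y.
  apply: cases_i.
  - by exists (- X 4); rewrite alNl eA4 opprK.
  - by exists (X 3); rewrite eA3.
  - exists (a34 *: X 2 + b34 *: X 3); rewrite (eB3 _ _ h34) alDl !alZl eA3 //.
  - exists (- a34 *: X 1 + b34 *: X 4); rewrite (eB4 _ _ h34) alDl !alZl eA4.
    by rewrite opprD scaleNr scalerN.
  - move=> m hm; have [a [b h]] := coef3 m.
    exists (- a *: X 1 + b *: X 4); rewrite (eBk _ _ _ hm h) alDl !alZl eA4.
    by rewrite opprD scaleNr scalerN.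
apply: Uzero; first exact: lcsZ.
move=> i hi; split.
- by rewrite -Ssym eAk // fm0l.
- have [v ->] := inA i hi; by rewrite -Ssym eAk // fm0l.
Qed.

Lemma gZxY x : g Z x Y = - g x Z Y. Proof. exact: g12. Qed.
Lemma gYxZ x : g Y x Z = g x Z Y. Proof. exact: gcyc. Qed.
Lemma gYxY x : g Y x Y = 0. Proof. exact: gxyx. Qed.
Lemma gZxZ x : g Z x Z = 0. Proof. exact: gxyx. Qed.
Lemma gxYZ x : g x Y Z = - g x Z Y. Proof. exact: g23. Qed.
Lemma gxZZ x : g x Z Z = 0. Proof. exact: gyxx. Qed.
Lemma gxYY x : g x Y Y = 0. Proof. exact: gyxx. Qed.

Lemma lcsL0 c : in_lcs br 1 (c *: Y - Z).
Proof.
exists [:: (c *: X 1, X 2); (- X 1, X 3)]; split; first by [].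
by rewrite !big_cons big_nil addr0 /= brZl brNl H12 H13.
Qed.

Definition BcA c := forall i, (1 <= i <= n)%N -> al (X i) Z = c *: al (X i) Y.

Lemma alL0 c i : BcA c -> (1 <= i <= n)%N -> al (X i) (c *: Y - Z) = 0.
Proof. by move=> h hi; rewrite alBr alZr h // subrr. Qed.

Lemma D1 c : BcA c ->
  [/\ g (X 3) Z Y = c * g (X 2) Z Y, g (X 4) Z Y = - c * g (X 1) Z Y &
      forall k, (5 <= k <= n)%N -> g (X k) Z Y = 0].
Proof.
move=> hB.
have h0 := lcsL0 c.
have hA i : (1 <= i <= n)%N -> al (X i) (c *: Y - Z) = 0 by move=> hi; apply: alL0.
split.
- have e := dg0 _ _ _ _ h0 (hA 1%N ltac:(lia)) (hA 2%N ltac:(lia)) (hA 3%N ltac:(lia)).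
  rewrite H12 H13 H23 g0l !gBr !gZr gYxY gZxZ gYxZ gZxY in e; nra.
- have e := dg0 _ _ _ _ h0 (hA 1%N ltac:(lia)) (hA 2%N ltac:(lia)) (hA 4%N ltac:(lia)).
  rewrite H12 H14 H24 g0l !gBr !gZr gYxY gZxZ gYxZ gZxY in e; nra.
- move=> k hk; have [h1 h2] := H5 k hk.
  have e := dg0 _ _ _ _ h0 (hA 1%N ltac:(lia)) (hA 2%N ltac:(lia)) (hA k ltac:(lia)).
  rewrite H12 h1 h2 !g0l !gBr !gZr gYxY gYxZ in e; nra.
Qed.

Lemma D34 : al (X 1) Y = 0 -> al (X 2) Y = 0 -> al (X 3) Y = 0 -> al (X 4) Y = 0 ->
  g (X 1) Z Y = 0 /\ g (X 2) Z Y = 0.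
Proof.
move=> a1 a2 a3 a4; split.
- have e := dg0 _ _ _ _ lcsY a2 a4 a1.
  rewrite (brC (X 2) (X 1)) (brC (X 4) (X 1)) H12 H14 H24 oppr0 g0l gNl gYxY gZxY in e; lra.
- have e := dg0 _ _ _ _ lcsY a1 a3 a2.
  rewrite (brC (X 3) (X 2)) H12 H13 H23 oppr0 g0l gYxY gZxY in e; lra.
Qed.

Lemma D2 c j a b t1 t2 : (5 <= j <= n)%N -> br (X 3) (X j) = a *: Y + b *: Z -> b != 0 ->
  al (X 3) Y = c *: al (X 2) Y -> g (X j) Z Y = 0 ->
  t1 *: al (X 1) Y + t2 *: al (X 2) Y = 0 ->
  t1 * g (X 1) Z Y + t2 * g (X 2) Z Y = 0.
Proof.
move=> hj hb bn0 hA3 phij ht.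
have [h1 h2] := H5 j hj.
have av : al (t1 *: X 1 + t2 *: X 2) Y = 0 by rewrite alDl !alZl.
have aw : al (X 3 - c *: X 2) Y = 0 by rewrite alBl alZl hA3 subrr.
have e := dg0 _ _ _ _ lcsY av (eAk _ hj) aw.
rewrite !brDl !brZl h1 h2 !scaler0 addr0 g0l in e.
rewrite !brBr !brZr H13 H12 H23 brxx !scaler0 sub0r in e.
rewrite (brC (X j) (X 3)) (brC (X j) (X 2)) hb h2 oppr0 scaler0 subr0 in e.
rewrite addr0 scaler0 addr0 gZl gBl gZl gNl gDl !gZl !gDm !gZm !gYxY !gZxY phij in e.
have : b * (t1 * g (X 1) Z Y + t2 * g (X 2) Z Y) = 0 by nra.
by move/eqP; rewrite mulf_eq0 (negPf bn0) /= => /eqP.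
Qed.

Lemma finish c A0 :
  (forall i, (1 <= i <= n)%N -> al (X i) Z = c *: al (X i) Y /\ g (X i) Z Y = fm A0 (al (X i) Y)) ->
  False.
Proof.
move=> H.
have hall : forall v, al v Z = c *: al v Y /\ g v Z Y = fm A0 (al v Y).
  apply: basis_ind.
  - by rewrite !al0l scaler0 g0l fm0r.
  - move=> a u v [h1 h2] [h3 h4]; rewrite !alDl !alZl gDl gZl h1 h2 h3 h4 fmDr fmZr.
    by split => //; apply/rowP => i; rewrite !mxE; ring.
  - exact: H.
  - by rewrite alYZ alYY scaler0 gxyx fm0r.
  - by rewrite alZZ alZY scaler0 gxxy fm0r.
have cen : in_center br (c *: Y - Z).
  by move=> y; rewrite brBl brZl brYl brZl' scaler0 subr0.
have hA := @condA1 (c *: Y - Z) (conj cen (lcsL0 c)).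
have : c *: Y - Z = 0.
  apply: hA.
  exists A0, (fun _ => 0); split; first by move=> *; rewrite mulr0 addr0.
  move=> L; split.
    by rewrite alBr alZr; case: (hall L) => h _; rewrite h subrr.
  move=> y hy; have [s [t ->]] := spanYZ _ hy.
  case: (hall L) => h1 h2.
  rewrite gDr !gZr !gBm !gZm gxYY gxZZ gxYZ alDr !alZr h1 fmDr !fmZr h2; ring.
move/eqP; rewrite subr_eq0 => /eqP e.
have := @indepYZ c (-1); rewrite scaleN1r -e subrr => /(_ erefl) [_].
by move/eqP; rewrite oppr_eq0 oner_eq0.
Qed.

Lemma Uzero2 x1 W1 x2 W2 : in_lcs br 1 W1 -> in_lcs br 1 W2 ->
  fm (al x1 W1) (al x1 W1) = 0 -> fm (al x1 W1) (al x2 W2) = 0 -> fm (al x2 W2) (al x2 W2) = 0 ->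
  (forall i, (1 <= i <= n)%N -> exists r1 r2 r3 r4,
     al (X i) Y = r1 *: al x1 W1 + r2 *: al x2 W2 /\ al (X i) Z = r3 *: al x1 W1 + r4 *: al x2 W2) ->
  al x1 W1 = 0 /\ al x2 W2 = 0.
Proof.
move=> h1 h2 f11 f12 f22 hs; split.
- apply: Uzero => // i hi; have [r1 [r2 [r3 [r4 [-> ->]]]]] := hs i hi.
  by rewrite !fmDr !fmZr f11 f12 !mulr0 addr0.
- apply: Uzero => // i hi; have [r1 [r2 [r3 [r4 [-> ->]]]]] := hs i hi.
  by rewrite !fmDr !fmZr (fmS _ (al x1 W1)) f22 f12 !mulr0 addr0.
Qed.

Lemma caseI a34 b34 : br (X 3) (X 4) = a34 *: Y + b34 *: Z ->
  al (X 1) Y = 0 -> al (X 2) Y = 0 -> al (X 1) Z = 0 -> al (X 2) Z = 0 -> False.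
Proof.
move=> h34 a1 a2 b1 b2.
have a3 : al (X 3) Y = 0 by rewrite eA3.
have a4 : al (X 4) Y = 0 by rewrite eA4 b1 oppr0.
have Bz : forall i, (1 <= i <= n)%N -> al (X i) Z = 0.
  apply: cases_i => //.
  - by rewrite (eB3 _ _ h34) a2 b2 !scaler0 addr0.
  - by rewrite (eB4 _ _ h34) a1 b1 !scaler0 addr0 oppr0.
  - exact: eBk0.
have hBc : BcA 0 by move=> i hi; rewrite Bz // scale0r.
case: (D1 _ hBc) => p3 p4 pk.
case: (D34 a1 a2 a3 a4) => p1 p2.
apply: (@finish 0 0) => i hi; rewrite fm0l scale0r Bz //; split => //.
move: i hi; apply: cases_i => //.
- by rewrite p3 mul0r.
- by rewrite p4 oppr0 mul0r.
Qed.

Lemma mainj j : (5 <= j <= n)%N -> br (X 3) (X j) = 0.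
Proof.
move=> hj.
have [a [b hab]] := coef3 j.
have [a34 [b34 h34]] := coef3 4.
have e1j : a *: al (X 1) Y + b *: al (X 1) Z = 0.
  have e := eBk _ _ _ hj hab; rewrite eBk0 // in e; vsolve e.
have e2j := e2k _ _ _ hj hab.
have [/andP [/eqP a0 /eqP b0]|hnz] := boolP ((a == 0) && (b == 0)).
  by rewrite hab a0 b0 !scale0r addr0.
exfalso.
have [b0|bn0] := eqVneq b 0.
-
  have an0 : a != 0 by move: hnz; rewrite b0 eqxx andbT.
  rewrite b0 scale0r addr0 in e1j; rewrite b0 in e2j.
  have a1 : al (X 1) Y = 0 by move/eqP: e1j; rewrite scaler_eq0 (negPf an0) /= => /eqP.
  rewrite scale0r addr0 in e2j.
  have a2 : al (X 2) Y = 0 by move/eqP: e2j; rewrite scaler_eq0 (negPf an0) /= => /eqP.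
  have f11 : fm (al (X 1) Z) (al (X 1) Z) = 0.
    have := Ssym (X 1) (X 4); rewrite a1 fm0l eA4 fmNr; lra.
  have f12 : fm (al (X 1) Z) (al (X 2) Z) = 0.
    by have := Ssym (X 1) (X 3); rewrite a1 fm0l eA3.
  have f22 : fm (al (X 2) Z) (al (X 2) Z) = 0.
    by have := Ssym (X 2) (X 3); rewrite a2 fm0l eA3.
  have [|b1 b2] := Uzero2 _ _ _ _ lcsZ lcsZ f11 f12 f22.
    apply: cases_i.
    - by exists 0, 0, 1, 0; rewrite a1 !scale0r scale1r !addr0.
    - by exists 0, 0, 0, 1; rewrite a2 !scale0r scale1r !add0r.
    - by exists 0, 1, 0, b34; rewrite eA3 (eB3 _ _ h34) a2 !scale0r scale1r !add0r scaler0 add0r.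
    - exists (-1), 0, (- b34), 0; rewrite eA4 (eB4 _ _ h34) a1 !scale0r scaleN1r !addr0 scaler0 add0r.
      by rewrite scaleNr.
    - move=> k hk; exists 0, 0, 0, 0; by rewrite (eAk k) // (eBk0 k) // !scale0r addr0.
  exact: (caseI _ _ h34 a1 a2 b1 b2).
-
  pose c := - a / b.
  have sol (x y : 'rV[R]_p) : a *: x + b *: y = 0 -> y = c *: x.
    move=> e; apply/rowP => i; move/rowP/(_ i): e; rewrite !mxE => e.
    rewrite -[LHS](mulKf bn0).
    have -> : b * y 0 i = - a * x 0 i by lra.
    rewrite /c; field; exact: bn0.
  have b1 := sol _ _ e1j.
  have b2 := sol _ _ e2j.
  pose k := a34 + b34 * c - c ^+ 2.
  have [k0|kn0] := eqVneq k 0.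
  +
    have hBc : BcA c.
      apply: cases_i => //.
      - rewrite (eB3 _ _ h34) eA3 b2; apply/rowP => i; rewrite !mxE.
        move: k0; rewrite /k => k0; nra.
      - rewrite (eB4 _ _ h34) eA4 b1; apply/rowP => i; rewrite !mxE.
        move: k0; rewrite /k => k0; nra.
      - by move=> m hm; rewrite eAk // eBk0 // scaler0.
    case: (D1 _ hBc) => p3 p4 pk.
    have a3 : al (X 3) Y = c *: al (X 2) Y by rewrite eA3.
    have hD := fun t1 t2 => D2 _ _ _ _ t1 t2 hj hab bn0 a3 (pk j hj).
    have [A0 [h1 h2]] := solve2 _ _ _ _ hD.
    apply: (@finish c A0).
    apply: cases_i.
    - by split.
    - by split.
    - by split; [apply: hBc; lia | rewrite p3 a3 fmZr h2].
    - by split; [apply: hBc; lia | rewrite p4 eA4 b1 fmNr fmZr h1 mulNr].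
    - by move=> m hm; split; [apply: hBc; lia | rewrite pk // eAk // fm0r].
  +
    have f11 : fm (al (X 1) Y) (al (X 1) Y) = 0.
      have := Ssym (X 1) (X 4); rewrite (eB4 _ _ h34) eA4 b1.
      rewrite !fmNr !fmDr !fmZr !fmZl => e.
      have : k * fm (al (X 1) Y) (al (X 1) Y) = 0 by rewrite /k; nra.
      by move/eqP; rewrite mulf_eq0 (negPf kn0) /= => /eqP.
    have f12 : fm (al (X 1) Y) (al (X 2) Y) = 0.
      have := Ssym (X 1) (X 3); rewrite (eB3 _ _ h34) eA3 b1 b2.
      rewrite !fmDr !fmZr !fmZl => e.
      have : k * fm (al (X 1) Y) (al (X 2) Y) = 0 by rewrite /k; nra.
      by move/eqP; rewrite mulf_eq0 (negPf kn0) /= => /eqP.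
    have f22 : fm (al (X 2) Y) (al (X 2) Y) = 0.
      have := Ssym (X 2) (X 3); rewrite (eB3 _ _ h34) eA3 b2.
      rewrite !fmDr !fmZr !fmZl => e.
      have : k * fm (al (X 2) Y) (al (X 2) Y) = 0 by rewrite /k; nra.
      by move/eqP; rewrite mulf_eq0 (negPf kn0) /= => /eqP.
    have [|a1 a2] := Uzero2 _ _ _ _ lcsY lcsY f11 f12 f22.
      apply: cases_i.
      - by exists 1, 0, c, 0; rewrite b1 !scale0r scale1r !addr0.
      - by exists 0, 1, 0, c; rewrite b2 !scale0r scale1r !add0r.
      - exists 0, c, 0, (a34 + b34 * c); rewrite eA3 (eB3 _ _ h34) b2 !scale0r !add0r.
        by split => //; apply/rowP => i; rewrite !mxE; ring.
      - exists (- c), 0, (- (a34 + b34 * c)), 0; rewrite eA4 (eB4 _ _ h34) b1 !scale0r !addr0.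
        by split; apply/rowP => i; rewrite !mxE; ring.
      - move=> m hm; exists 0, 0, 0, 0; by rewrite (eAk m) // (eBk0 m) // !scale0r addr0.
    apply: (caseI _ _ h34 a1 a2); by rewrite ?b1 ?b2 ?a1 ?a2 scaler0.
Qed.

End Main.

Theorem lemma8 (R : realType) (d n : nat)
    (br : 'rV[R]_d -> 'rV[R]_d -> 'rV[R]_d)
    (X : nat -> 'rV[R]_d) (Y Z : 'rV[R]_d) :
  (4 <= n)%N ->
  lie_algebra br ->
  nilpotent_lie br ->
  admissible_lie br ->
  sub_dim (in_lcs br 1) 2 ->
  (forall x, in_lcs br 1 x -> in_center br x) ->
  row_free (fam_mx n X Y Z) -> row_full (fam_mx n X Y Z) ->
  br (X 1%N) (X 2%N) = Y ->
  br (X 1%N) (X 3%N) = Z ->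
  br (X 2%N) (X 3%N) = 0 ->
  br (X 1%N) (X 4%N) = 0 ->
  br (X 2%N) (X 4%N) = Z ->
  (forall j, (5 <= j <= n)%N -> br (X 1%N) (X j) = 0 /\ br (X 2%N) (X j) = 0) ->
  forall j, (5 <= j <= n)%N -> br (X 3%N) (X j) = 0.
Proof.
move=> Hn Hlie _ [p [fm [act [al [g [Horth _ Hcoc Hact Hadm]]]]]] Hdim Hcen Hfree Hfull
  H12 H13 H23 H14 H24 H5 j hj.
by apply: (@mainj R d n br X Y Z p fm act al g).
Qed.
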